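(* For all $M>0$, all $\alpha>0$, all $q$ with $|q|<1$ and all $\epsilon>0$ there exist constants $C_1,C_2>0$ such that for all $p$ with $|p|<|q|$, \[ C_1\le|(zp^{-\alpha};q)|\,|z|^{-k\alpha}\,|q|^{\binom{k\alpha+1}{2}}\le C_2 \] for all $z$ with $1/M<|z|<M$ and $|1-z/w|>\epsilon$ for every zero $w$ of $z\mapsto(zp^{-\alpha};q)$ and of $z\mapsto(qp^\alpha/z;q)$, where $p=xq^k$ with $|x|=1$ and $k\in\mathbb{R}$.
   Context: $(y;q)=\prod_{r\ge0}(1-yq^r)$. For real $y$, $\binom{y}{2}=y(y-1)/2$. The paper phrases the condition on $z$ as ''$z$ away from the zeros''. *)

(* Defs.v *)
From Stdlib Require Import Reals.
From Coquelicot Require Import Coquelicot.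
Open Scope R_scope.

(* Principal argument of a nonzero complex number, in (-PI, PI]. *)
Definition Carg (z : C) : R :=
  let t := acos (Re z / Cmod z) in
  if Rle_dec 0 (Im z) then t else - t.

Definition Cpowr (z : C) (a : R) : C :=
  if Req_EM_T (Cmod z) 0 then 0%C
  else ((Rpower (Cmod z) a * cos (a * Carg z))%R,
        (Rpower (Cmod z) a * sin (a * Carg z))%R).

Fixpoint Cpow_nat (q : C) (n : nat) : C :=
  match n with O => 1%C | S m => Cmult q (Cpow_nat q m) end.

Fixpoint qpoch_part (y q : C) (n : nat) : C :=
  match n with
  | O => 1%C
  | S m => Cmult (qpoch_part y q m) (Cminus 1 (Cmult y (Cpow_nat q m)))
  end.

(* (y;q) = prod_{r>=0} (1 - y q^r): limit of the partial products
   (taken componentwise; it converges for |q| < 1). *)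
Definition qpoch (y q : C) : C :=
  (real (Lim_seq (fun n => Re (qpoch_part y q n))),
   real (Lim_seq (fun n => Im (qpoch_part y q n)))).

(* Main.v *)
Require Import Defs.
From Stdlib Require Import Reals.
From Coquelicot Require Import Coquelicot.
From Stdlib Require Import Lra Lia.
Open Scope R_scope.

Fixpoint rprod (f : nat -> R) (n : nat) : R :=
  match n with O => 1 | S m => rprod f m * f m end.
Fixpoint rsum (f : nat -> R) (n : nat) : R :=
  match n with O => 0 | S m => rsum f m + f m end.

Lemma rprod_ext f g n : (forall i, (i < n)%nat -> f i = g i) -> rprod f n = rprod g n.
Proof. induction n; simpl; intros H; auto. rewrite IHn, H; auto. Qed.

Lemma rsum_ext f g n : (forall i, (i < n)%nat -> f i = g i) -> rsum f n = rsum g n.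
Proof. induction n; simpl; intros H; auto. rewrite IHn, H; auto. Qed.

Lemma rprod_mult f g n : rprod (fun i => f i * g i) n = rprod f n * rprod g n.
Proof. induction n; simpl. ring. rewrite IHn; ring. Qed.

Lemma rprod_exp f n : rprod (fun i => exp (f i)) n = exp (rsum f n).
Proof. induction n; simpl. now rewrite exp_0. rewrite IHn, exp_plus; ring. Qed.

Lemma rprod_ge0 f n : (forall i, 0 <= f i) -> 0 <= rprod f n.
Proof. induction n; simpl; intros H. lra. apply Rmult_le_pos; auto. Qed.

Lemma rprod_le f g n : (forall i, 0 <= f i <= g i) -> rprod f n <= rprod g n.
Proof.
  induction n; simpl; intros H. lra.
  apply Rmult_le_compat; try apply rprod_ge0; try apply H; auto.
Qed.

Lemma rsum_scal K f n : rsum (fun i => K * f i) n = K * rsum f n.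
Proof. induction n; simpl. ring. rewrite IHn; ring. Qed.

Lemma rsum_geom rho n : rho <> 1 -> rsum (fun i => rho ^ i) n = (1 - rho ^ n) / (1 - rho).
Proof.
  intros H. assert (1 - rho <> 0) by lra.
  induction n; simpl. field; auto. rewrite IHn. field; auto.
Qed.

Lemma rsum_geom_le rho n : 0 <= rho < 1 -> rsum (fun i => rho ^ i) n <= 1 / (1 - rho).
Proof.
  intros H. rewrite rsum_geom by lra.
  unfold Rdiv. apply Rmult_le_compat_r.
  - left; apply Rinv_0_lt_compat; lra.
  - pose proof (pow_le rho n (proj1 H)); lra.
Qed.

Lemma rsum_INR n : rsum INR n = INR n * (INR n - 1) / 2.
Proof. induction n; simpl rsum. simpl; field. rewrite IHn, S_INR; field. Qed.

Lemma rsum_plus f g n : rsum (fun i => f i + g i) n = rsum f n + rsum g n.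
Proof. induction n; simpl. ring. rewrite IHn; ring. Qed.

Lemma rsum_const c n : rsum (fun _ => c) n = INR n * c.
Proof. induction n; simpl rsum. simpl; ring. rewrite IHn, S_INR; ring. Qed.

Lemma rprod_shift f n : rprod f (S n) = f O * rprod (fun i => f (S i)) n.
Proof. induction n. simpl; ring. change (rprod f (S (S n))) with (rprod f (S n) * f (S n)).
  rewrite IHn. simpl; ring. Qed.

Lemma rprod_rev f n : rprod f n = rprod (fun i => f (n - 1 - i)%nat) n.
Proof.
  induction n. reflexivity.
  rewrite (rprod_shift (fun i => f (S n - 1 - i)%nat)).
  change (rprod f (S n)) with (rprod f n * f n). rewrite IHn.
  replace (S n - 1 - 0)%nat with n by lia.
  rewrite Rmult_comm. f_equal. apply rprod_ext. intros i Hi. f_equal. lia.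
Qed.

Lemma pow_le1 e n : 0 <= e <= 1 -> e ^ n <= 1.
Proof. intros H; induction n; simpl. lra.
  pose proof (pow_le e n (proj1 H)). nra. Qed.

Lemma pow_mono_dec e a b : 0 <= e <= 1 -> (a <= b)%nat -> e ^ b <= e ^ a.
Proof. intros H Hab. replace b with (a + (b - a))%nat by lia.
  rewrite pow_add. pose proof (pow_le e a (proj1 H)). pose proof (pow_le1 e (b-a) H).
  pose proof (pow_le e (b-a) (proj1 H)). nra. Qed.

Lemma rprod_ind_ge e I0 n : 0 < e <= 1 ->
  e ^ I0 <= rprod (fun i => if Nat.ltb i I0 then e else 1) n.
Proof.
  intros He. assert (forall n, e ^ (Nat.min n I0) <= rprod (fun i => if Nat.ltb i I0 then e else 1) n).
  { induction n0; cbn [rprod]. simpl; lra.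
    destruct (Nat.ltb n0 I0) eqn:E.
    - apply Nat.ltb_lt in E. replace (Nat.min (S n0) I0) with (S (Nat.min n0 I0)) by lia.
      rewrite <- tech_pow_Rmult. nra.
    - apply Nat.ltb_ge in E. replace (Nat.min (S n0) I0) with (Nat.min n0 I0) by lia. lra. }
  eapply Rle_trans; [|apply H]. apply pow_mono_dec; lia || lra.
Qed.

Lemma one_minus_exp a : 0 <= a <= 1/2 -> exp (-2 * a) <= 1 - a.
Proof.
  intros H. pose proof (exp_ineq1_le (2*a)).
  assert (exp (-2*a) * exp (2*a) = 1).
  { rewrite <- exp_plus. replace (-2*a + 2*a) with 0 by ring. apply exp_0. }
  assert (0 < exp (-2*a)) by apply exp_pos.
  nra.
Qed.

Lemma exp_le x y : x <= y -> exp x <= exp y.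
Proof. intros [H|H]. left; apply exp_increasing; auto. subst; lra. Qed.

Lemma generic_upper (u : nat -> R) K rho n : 0 <= K -> 0 <= rho < 1 ->
  (forall i, 0 <= u i <= 1 + K * rho ^ i) -> rprod u n <= exp (K / (1 - rho)).
Proof.
  intros HK Hr Hu.
  apply Rle_trans with (rprod (fun i => exp (K * rho ^ i)) n).
  - apply rprod_le. intro i. split. apply Hu. eapply Rle_trans. apply Hu. apply exp_ineq1_le.
  - rewrite rprod_exp, rsum_scal. apply exp_le.
    replace (K / (1-rho)) with (K * (1/(1-rho))) by (unfold Rdiv; ring).
    apply Rmult_le_compat_l; auto. apply rsum_geom_le; auto.
Qed.

Lemma generic_lower (u : nat -> R) K rho e I0 n : 0 <= K -> 0 <= rho < 1 -> 0 < e <= 1 ->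
  (forall i, (I0 <= i)%nat -> K * rho ^ i <= 1/2) ->
  (forall i, exists a, 0 <= a <= K * rho ^ i /\ 1 - a <= u i /\ 0 <= u i /\ (1/2 < a -> e <= u i)) ->
  e ^ I0 * exp (-2 * (K / (1 - rho))) <= rprod u n.
Proof.
  intros HK Hr He HI Hu.
  apply Rle_trans with (rprod (fun i => (if Nat.ltb i I0 then e else 1) * exp (-2 * (K * rho ^ i))) n).
  - rewrite rprod_mult, rprod_exp. apply Rmult_le_compat.
    + apply pow_le; lra.
    + left; apply exp_pos.
    + apply rprod_ind_ge; auto.
    + apply exp_le.
      replace (rsum (fun i => -2 * (K * rho ^ i)) n) with (-2 * (K * rsum (fun i => rho ^ i) n)).
      2:{ rewrite <- rsum_scal, <- rsum_scal. apply rsum_ext; intros; ring. }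
      replace (K / (1-rho)) with (K * (1/(1-rho))) by (unfold Rdiv; ring).
      pose proof (rsum_geom_le rho n Hr). apply Rmult_le_compat_neg_l; [lra|].
      apply Rmult_le_compat_l; auto.
  - apply rprod_le. intro i. destruct (Hu i) as [a [Ha [H1 [H2 H3]]]].
    assert (Hx : exp (-2 * (K * rho ^ i)) <= 1).
    { rewrite <- exp_0. apply exp_le. pose proof (pow_le rho i (proj1 Hr)). nra. }
    split.
    + apply Rmult_le_pos. destruct (Nat.ltb i I0); lra. left; apply exp_pos.
    + destruct (Rle_lt_dec a (1/2)) as [Hle|Hgt].
      * assert (exp (-2 * (K * rho ^ i)) <= u i).
        { eapply Rle_trans with (exp (-2 * a)). apply exp_le; lra.
          eapply Rle_trans. apply one_minus_exp; lra. lra. }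
        assert (0 < exp (-2 * (K * rho ^ i))) by apply exp_pos.
        destruct (Nat.ltb i I0); nra.
      * assert (Hi : (i < I0)%nat).
        { destruct (Nat.lt_ge_cases i I0); auto. specialize (HI i H). lra. }
        apply Nat.ltb_lt in Hi. rewrite Hi. specialize (H3 Hgt).
        assert (0 < exp (-2 * (K * rho ^ i))) by apply exp_pos. nra.
Qed.

Lemma Cmod_Cpow_nat q n : Cmod (Cpow_nat q n) = Cmod q ^ n.
Proof. induction n; simpl. apply Cmod_1. rewrite Cmod_mult, IHn; ring. Qed.

Lemma Cpow_nat_add q n m : Cpow_nat q (n + m) = Cmult (Cpow_nat q n) (Cpow_nat q m).
Proof. induction n; simpl. ring. rewrite IHn; ring. Qed.

Lemma qpoch_part_mod y q n :
  Cmod (qpoch_part y q n) = rprod (fun r => Cmod (Cminus 1 (Cmult y (Cpow_nat q r)))) n.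
Proof. induction n; simpl. apply Cmod_1. rewrite Cmod_mult, IHn; ring. Qed.

Lemma qpoch_part_split y q n m :
  qpoch_part y q (n + m) = Cmult (qpoch_part y q n) (qpoch_part (Cmult y (Cpow_nat q n)) q m).
Proof.
  induction m; simpl.
  - rewrite Nat.add_0_r; ring.
  - rewrite Nat.add_succ_r. simpl. rewrite IHm, Cpow_nat_add. ring.
Qed.

Lemma Cmod_1_minus x : Cmod (Cminus 1 x) <= 1 + Cmod x.
Proof. unfold Cminus. eapply Rle_trans. apply Cmod_triangle. rewrite Cmod_1, Cmod_opp; lra. Qed.

Lemma Cmod_1_minus_ge x : 1 - Cmod x <= Cmod (Cminus 1 x).
Proof.
  pose proof (Cmod_triangle (Cminus 1 x) x).
  replace (Cplus (Cminus 1 x) x) with (RtoC 1) in H by ring. rewrite Cmod_1 in H. lra.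
Qed.

Lemma Cmod_rev_tri a b : Cmod a - Cmod b <= Cmod (Cminus a b).
Proof.
  pose proof (Cmod_triangle (Cminus a b) b).
  replace (Cplus (Cminus a b) b) with a in H by ring. lra.
Qed.

Lemma Cmod_le_sum z : Cmod z <= Rabs (Re z) + Rabs (Im z).
Proof.
  unfold Cmod, Re, Im. destruct z as [x y]; cbn [fst snd].
  rewrite <- (sqrt_pow2 (Rabs x + Rabs y)) by (pose proof (Rabs_pos x); pose proof (Rabs_pos y); lra).
  apply sqrt_le_1_alt.
  pose proof (Rabs_pos x); pose proof (Rabs_pos y).
  rewrite <- (pow2_abs x).
  rewrite <- (pow2_abs y).
  nra.
Qed.

Lemma Im_le_Cmod z : Rabs (Im z) <= Cmod z.
Proof. eapply Rle_trans; [|apply Rmax_Cmod]. apply Rmax_r. Qed.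

Section Conv.
Variables (y q : C).
Hypothesis Hq : Cmod q < 1.
Let rho := Cmod q.
Let a := qpoch_part y q.
Let B := exp (Cmod y / (1 - rho)).

Lemma a_bound n : Cmod (a n) <= B.
Proof.
  unfold a, B. rewrite qpoch_part_mod. apply generic_upper.
  apply Cmod_ge_0. split; [apply Cmod_ge_0|exact Hq].
  intro i. split. apply Cmod_ge_0. eapply Rle_trans. apply Cmod_1_minus.
  rewrite Cmod_mult, Cmod_Cpow_nat. unfold rho; lra.
Qed.

Lemma a_step n : Cmod (Cminus (a (S n)) (a n)) <= B * Cmod y * rho ^ n.
Proof.
  unfold a. simpl.
  replace (Cminus (Cmult (qpoch_part y q n) (Cminus 1 (Cmult y (Cpow_nat q n)))) (qpoch_part y q n))
    with (Copp (Cmult (qpoch_part y q n) (Cmult y (Cpow_nat q n)))) by ring.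
  rewrite Cmod_opp, !Cmod_mult, Cmod_Cpow_nat.
  pose proof (a_bound n). unfold a in H. fold rho.
  pose proof (Cmod_ge_0 y). pose proof (pow_le rho n (Cmod_ge_0 q)).
  assert (0 <= Cmod y * rho ^ n) by nra. rewrite (Rmult_assoc B). apply Rmult_le_compat_r; auto.
Qed.

Lemma a_cauchy n j : Cmod (Cminus (a (n + j)%nat) (a n)) <= B * Cmod y * rho ^ n / (1 - rho).
Proof.
  assert (H1 : 0 <= rho < 1) by (split; [apply Cmod_ge_0|exact Hq]).
  assert (Hgen : Cmod (Cminus (a (n + j)%nat) (a n)) <= B * Cmod y * rho ^ n * (1 - rho ^ j) / (1 - rho)).
  { induction j.
    - rewrite Nat.add_0_r. replace (Cminus (a n) (a n)) with (RtoC 0) by ring.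
      rewrite Cmod_0. simpl. unfold Rdiv. rewrite Rminus_diag, Rmult_0_r, Rmult_0_l. lra.
    - rewrite Nat.add_succ_r.
      replace (Cminus (a (S (n + j))) (a n)) with (Cplus (Cminus (a (S (n + j))) (a (n + j)%nat)) (Cminus (a (n+j)%nat) (a n))) by ring.
      eapply Rle_trans. apply Cmod_triangle.
      eapply Rle_trans. apply Rplus_le_compat. apply a_step. apply IHj.
      right. rewrite pow_add. simpl. field. lra. }
  eapply Rle_trans. apply Hgen.
  unfold Rdiv. apply Rmult_le_compat_r. left; apply Rinv_0_lt_compat; lra.
  pose proof (pow_le rho j (proj1 H1)). pose proof (pow_le rho n (proj1 H1)).
  assert (0 <= B) by (left; apply exp_pos). pose proof (Cmod_ge_0 y).
  assert (0 <= B * Cmod y * rho ^ n) by (repeat apply Rmult_le_pos; auto).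
  nra.
Qed.

Lemma a_cauchy2 (f : C -> R) : (forall z, Rabs (f z) <= Cmod z) -> (forall u v, f (Cminus u v) = f u - f v) ->
  ex_lim_seq_cauchy (fun n => f (a n)).
Proof.
  intros Hf Hl eps.
  assert (H1 : 0 <= rho < 1) by (split; [apply Cmod_ge_0|exact Hq]).
  assert (0 <= B) by (left; apply exp_pos). pose proof (Cmod_ge_0 y).
  set (K := B * Cmod y).
  assert (0 <= K) by (apply Rmult_le_pos; auto).
  set (d := eps * (1 - rho) / (4 * (K + 1))).
  assert (Hd : 0 < d). { unfold d. pose proof (cond_pos eps). apply Rdiv_lt_0_compat; nra. }
  assert (Hr : Rabs rho < 1) by (rewrite Rabs_right; lra).
  destruct (pow_lt_1_zero rho Hr d Hd) as [N HN].
  exists N. intros n m Hn Hm.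
  assert (Hb : forall k, (N <= k)%nat -> Cmod (Cminus (a k) (a N)) <= eps / 4).
  { intros k Hk. replace k with (N + (k - N))%nat by lia.
    eapply Rle_trans. apply a_cauchy. fold K.
    specialize (HN N (le_n N)). rewrite Rabs_right in HN by (apply Rle_ge, pow_le; lra).
    pose proof (pow_le rho N (proj1 H1)).
    apply Rle_trans with ((K + 1) * d / (1 - rho)).
    - unfold Rdiv. apply Rmult_le_compat_r. left; apply Rinv_0_lt_compat; lra. nra.
    - unfold d. right. field. lra. }
  replace (f (a n) - f (a m)) with (f (Cminus (a n) (a N)) - f (Cminus (a m) (a N))) by (rewrite !Hl; ring).
  unfold Rminus. eapply Rle_lt_trans. apply Rabs_triang.
  rewrite Rabs_Ropp.
  pose proof (Hb n Hn). pose proof (Hb m Hm).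
  pose proof (Hf (Cminus (a n) (a N))). pose proof (Hf (Cminus (a m) (a N))).
  pose proof (cond_pos eps). lra.
Qed.
End Conv.

Lemma qpoch_lim y q : Cmod q < 1 ->
  is_lim_seq (fun n => Cmod (qpoch_part y q n)) (Cmod (qpoch y q)).
Proof.
  intros Hq.
  assert (ER : ex_finite_lim_seq (fun n => Re (qpoch_part y q n))).
  { apply ex_lim_seq_cauchy_corr. apply (a_cauchy2 y q Hq Re). apply re_le_Cmod.
    intros u v. destruct u, v. simpl. ring. }
  assert (EI : ex_finite_lim_seq (fun n => Im (qpoch_part y q n))).
  { apply ex_lim_seq_cauchy_corr. apply (a_cauchy2 y q Hq Im). apply Im_le_Cmod.
    intros u v. destruct u, v. simpl. ring. }
  destruct ER as [lr Hr]. destruct EI as [li Hi].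
  assert (E : qpoch y q = (lr, li)).
  { unfold qpoch. rewrite (is_lim_seq_unique _ _ Hr), (is_lim_seq_unique _ _ Hi). reflexivity. }
  rewrite E. apply is_lim_seq_Reals. apply is_lim_seq_Reals in Hr. apply is_lim_seq_Reals in Hi.
  intros eps Heps.
  destruct (Hr (eps/2)) as [N1 H1]; [lra|]. destruct (Hi (eps/2)) as [N2 H2]; [lra|].
  exists (Nat.max N1 N2). intros n Hn.
  specialize (H1 n ltac:(lia)). specialize (H2 n ltac:(lia)).
  unfold R_dist in *.
  pose proof (Cmod_rev_tri (qpoch_part y q n) (lr, li)).
  pose proof (Cmod_rev_tri (lr, li) (qpoch_part y q n)).
  pose proof (Cmod_le_sum (Cminus (qpoch_part y q n) (lr, li))).
  replace (Cminus (lr, li) (qpoch_part y q n)) with (Copp (Cminus (qpoch_part y q n) (lr, li))) in H0 by ring.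
  rewrite Cmod_opp in H0.
  assert (Re (Cminus (qpoch_part y q n) (lr, li)) = Re (qpoch_part y q n) - lr) by (destruct (qpoch_part y q n); simpl; ring).
  assert (Im (Cminus (qpoch_part y q n) (lr, li)) = Im (qpoch_part y q n) - li) by (destruct (qpoch_part y q n); simpl; ring).
  rewrite H4, H5 in H3.
  apply Rabs_def1; lra.
Qed.

Lemma qpoch_part_zero y q r m : Cminus 1 (Cmult y (Cpow_nat q r)) = 0%C ->
  qpoch_part y q (S r + m) = 0%C.
Proof.
  intros H. induction m.
  - rewrite Nat.add_0_r. simpl. rewrite H. ring.
  - rewrite Nat.add_succ_r. cbn [qpoch_part]. rewrite IHm. ring.
Qed.

Lemma qpoch_zero (q : C) (r : nat) : q <> 0%C -> qpoch (Cinv (Cpow_nat q r)) q = 0%C.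
Proof.
  intros Hq.
  assert (HP : Cpow_nat q r <> 0%C).
  { intro E. apply (f_equal Cmod) in E. rewrite Cmod_Cpow_nat, Cmod_0 in E.
    revert E. apply pow_nonzero. apply Rgt_not_eq, Cmod_gt_0, Hq. }
  assert (Hz : forall m, qpoch_part (Cinv (Cpow_nat q r)) q (S r + m) = 0%C).
  { intro m. apply qpoch_part_zero. field. auto. }
  assert (L : forall f : C -> R, f 0%C = 0 -> Lim_seq (fun n => f (qpoch_part (Cinv (Cpow_nat q r)) q n)) = 0).
  { intros f Hf. apply is_lim_seq_unique. apply is_lim_seq_ext_loc with (fun _ => 0).
    exists (S r). intros n Hn. replace n with (S r + (n - S r))%nat by lia. rewrite Hz. auto.
    apply is_lim_seq_const. }
  unfold qpoch. rewrite (L Re), (L Im); reflexivity.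
Qed.

Lemma Cmod_Cpowr (p : C) a : Cmod p <> 0 -> Cmod (Cpowr p a) = Rpower (Cmod p) a.
Proof.
  intros H. unfold Cpowr. destruct (Req_EM_T (Cmod p) 0); [contradiction|].
  unfold Cmod at 1. cbn [fst snd].
  set (R0 := Rpower (Cmod p) a).
  replace ((R0 * cos (a * Carg p)) ^ 2 + (R0 * sin (a * Carg p)) ^ 2) with (R0 ^ 2)
    by (pose proof (sin2_cos2 (a * Carg p)); unfold Rsqr in *; nra).
  apply sqrt_pow2. left; apply exp_pos.
Qed.

Lemma one_minus_inv (c : C) : c <> 0%C -> Cmod (Cminus 1 c) = Cmod c * Cmod (Cminus 1 (Cinv c)).
Proof.
  intros H. rewrite <- Cmod_mult. replace (Cmult c (Cminus 1 (Cinv c))) with (Copp (Cminus 1 c)) by (field; auto).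
  apply eq_sym, Cmod_opp.
Qed.

Lemma pow_exp rho r : 0 < rho -> rho ^ r = exp (INR r * ln rho).
Proof. intros H. rewrite <- Rpower_pow by auto. reflexivity. Qed.

Lemma phase_bounds (l L lam lnM : R) (n : nat) :
  L < 0 -> 0 < lnM -> - lnM < l < lnM -> INR n <= lam < INR n + 1 ->
  exp (L - lnM) <= exp (INR n * l + (INR n * (INR n - 1) / 2 - INR n * lam) * L) * exp (- lam * l)
                   * exp ((lam + 1) * lam / 2 * L) <= exp lnM.
Proof.
  intros HL HM Hl Hn.
  rewrite <- !exp_plus.
  set (t := lam - INR n).
  replace (INR n * l + (INR n * (INR n - 1) / 2 - INR n * lam) * L + - lam * l + (lam + 1) * lam / 2 * L)
    with (- t * l + L * (t * t + t) / 2) by (unfold t; field).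
  assert (0 <= t < 1) by (unfold t; lra).
  assert (t * l <= t * lnM) by nra. assert (- t * lnM <= t * l) by nra.
  assert (t * lnM <= lnM) by nra.
  assert (0 <= t * t + t <= 2) by nra.
  assert (L * 2 <= L * (t * t + t)) by nra. assert (L * (t * t + t) <= 0) by nra.
  split; apply exp_le; lra.
Qed.

Lemma core (y q : C) (eps M lam l : R) (n I0 : nat) :
  0 < Cmod q < 1 -> 1 < M -> 0 < eps ->
  (forall r, Cmod (Cmult y (Cpow_nat q r)) = exp (l + (INR r - lam) * ln (Cmod q))) ->
  (forall r, eps < Cmod (Cminus 1 (Cmult y (Cpow_nat q r)))) ->
  - ln M < l < ln M -> INR n <= lam < INR n + 1 ->
  (forall i, (I0 <= i)%nat -> M / Cmod q * Cmod q ^ i <= 1/2) ->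
  forall m,
  exp (ln (Cmod q) - ln M) * (Rmin (eps/2) 1 ^ I0 * exp (-2 * ((M / Cmod q) / (1 - Cmod q))))
     * (Rmin (eps/2) 1 ^ I0 * exp (-2 * ((M / Cmod q) / (1 - Cmod q))))
  <= Cmod (qpoch_part y q (n + m)) * exp (- lam * l) * exp ((lam + 1) * lam / 2 * ln (Cmod q))
  <= exp (ln M) * exp ((M / Cmod q) / (1 - Cmod q)) * exp ((M / Cmod q) / (1 - Cmod q)).
Proof.
  intros Hq HM Heps Hd He Hl Hn HI0 m.
  set (rho := Cmod q) in *. set (L := ln rho) in *.
  set (K := M / rho) in *. set (e := Rmin (eps/2) 1).
  assert (HL : L < 0). { unfold L. rewrite <- ln_1. apply ln_increasing; lra. }
  assert (HlnM : 0 < ln M). { rewrite <- ln_1. apply ln_increasing; lra. }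
  assert (HK : 0 <= K). { unfold K. apply Rlt_le, Rdiv_lt_0_compat; lra. }
  assert (Hr : 0 <= rho < 1) by lra.
  assert (He0 : 0 < e <= 1). { unfold e. split. apply Rmin_glb_lt; lra. apply Rmin_r. }
  assert (HeE : e <= eps / 2) by apply Rmin_l.
  assert (Hne : forall r, Cmult y (Cpow_nat q r) <> 0%C).
  { intros r E. pose proof (Hd r). rewrite E, Cmod_0 in H. pose proof (exp_pos (l + (INR r - lam) * L)). lra. }
  assert (HrhoE : forall i, rho ^ i = exp (INR i * L)) by (intro; apply pow_exp; lra).
  assert (HexpM : exp (ln M) = M) by (apply exp_ln; lra).
  assert (HexpL : exp L = rho) by (apply exp_ln; lra).
  rewrite qpoch_part_split, Cmod_mult, !qpoch_part_mod.
  rewrite (rprod_ext _ (fun r => Cmod (Cmult y (Cpow_nat q r)) * Cmod (Cminus 1 (Cinv (Cmult y (Cpow_nat q r)))))).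
  2:{ intros i _. apply one_minus_inv, Hne. }
  rewrite rprod_mult.
  rewrite (rprod_ext _ (fun r => exp (l + (INR r - lam) * L))) by (intros; apply Hd).
  rewrite rprod_exp.
  replace (rsum (fun r => l + (INR r - lam) * L) n) with (INR n * l + (INR n * (INR n - 1) / 2 - INR n * lam) * L).
  2:{ rewrite (rsum_ext _ (fun r => (l - lam * L) + L * INR r)) by (intros; ring).
      rewrite rsum_plus, rsum_const, rsum_scal, rsum_INR. field. }
  set (B1 := rprod (fun r => Cmod (Cminus 1 (Cinv (Cmult y (Cpow_nat q r))))) n).
  set (B2 := rprod (fun r => Cmod (Cminus 1 (Cmult (Cmult y (Cpow_nat q n)) (Cpow_nat q r)))) m).
  set (Ph := exp (INR n * l + (INR n * (INR n - 1) / 2 - INR n * lam) * L) * exp (- lam * l)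
                   * exp ((lam + 1) * lam / 2 * L)).
  assert (HPh : exp (L - ln M) <= Ph <= exp (ln M)) by (apply phase_bounds; lra).
  set (Lo := e ^ I0 * exp (-2 * (K / (1 - rho)))).
  set (U := exp (K / (1 - rho))).
  assert (HB2 : Lo <= B2 <= U).
  { assert (Ha : forall i, Cmod (Cmult (Cmult y (Cpow_nat q n)) (Cpow_nat q i)) <= K * rho ^ i).
    { intro i. replace (Cmult (Cmult y (Cpow_nat q n)) (Cpow_nat q i)) with (Cmult y (Cpow_nat q (n + i)))
        by (rewrite Cpow_nat_add; ring).
      rewrite Hd, plus_INR.
      replace (l + (INR n + INR i - lam) * L) with (l + INR i * L + (INR n - lam) * L) by ring.
      rewrite !exp_plus, <- HrhoE.
      assert (exp l <= M) by (rewrite <- HexpM; apply exp_le; lra).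
      assert (exp ((INR n - lam) * L) <= / rho).
      { rewrite <- HexpL, <- exp_Ropp. apply exp_le. nra. }
      unfold K. pose proof (pow_le rho i (proj1 Hr)).
      assert (0 < exp l) by apply exp_pos. assert (0 < exp ((INR n - lam) * L)) by apply exp_pos.
      unfold Rdiv. 
      apply Rle_trans with (M * rho ^ i * exp ((INR n - lam) * L)).
      - apply Rmult_le_compat_r. lra. apply Rmult_le_compat_r; lra.
      - assert (0 <= M * rho ^ i) by nra. 
        replace (M * / rho * rho ^ i) with (M * rho ^ i * / rho) by ring.
        apply Rmult_le_compat_l; lra. }
    split.
    - apply (generic_lower _ K rho e I0 m); auto.
      intro i. exists (Cmod (Cmult (Cmult y (Cpow_nat q n)) (Cpow_nat q i))).
      split. split. apply Cmod_ge_0. apply Ha.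
      split. apply Cmod_1_minus_ge. split. apply Cmod_ge_0.
      intros _. replace (Cmult (Cmult y (Cpow_nat q n)) (Cpow_nat q i)) with (Cmult y (Cpow_nat q (n + i)))
        by (rewrite Cpow_nat_add; ring).
      pose proof (He (n + i)%nat). lra.
    - apply (generic_upper _ K rho m); auto.
      intro i. split. apply Cmod_ge_0. eapply Rle_trans. apply Cmod_1_minus. pose proof (Ha i). lra. }
  assert (HB1 : Lo <= B1 <= U).
  { unfold B1. rewrite rprod_rev.
    set (u := fun i => if Nat.ltb i n then Cmod (Cminus 1 (Cinv (Cmult y (Cpow_nat q (n - 1 - i))))) else 1).
    rewrite (rprod_ext _ u).
    2:{ intros i Hi. unfold u. apply Nat.ltb_lt in Hi. rewrite Hi. reflexivity. }
    assert (Hu : forall i, exists a, 0 <= a <= K * rho ^ i /\ u i <= 1 + a /\ 1 - a <= u i /\ 0 <= u i /\ (1/2 < a -> e <= u i)).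
    { intro i. unfold u. destruct (Nat.ltb i n) eqn:Ei.
      2:{ exists 0. split. split. lra. pose proof (pow_le rho i (proj1 Hr)). nra. lra. }
      cut (exists a, 0 <= a <= K * rho ^ i /\ Cmod (Cminus 1 (Cinv (Cmult y (Cpow_nat q (n - 1 - i))))) <= 1 + a /\ 1 - a <= Cmod (Cminus 1 (Cinv (Cmult y (Cpow_nat q (n - 1 - i))))) /\ 0 <= Cmod (Cminus 1 (Cinv (Cmult y (Cpow_nat q (n - 1 - i))))) /\ (1/2 < a -> e <= Cmod (Cminus 1 (Cinv (Cmult y (Cpow_nat q (n - 1 - i))))))).
      { intros [a Ha]; exists a; tauto. }
      apply Nat.ltb_lt in Ei.
      set (r := (n - 1 - i)%nat).
      assert (Hri : INR r + INR i + 1 = INR n) by (rewrite <- plus_INR, <- S_INR; f_equal; unfold r; lia).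
      set (d := Cmult y (Cpow_nat q r)).
      assert (Hdn : d <> 0%C) by apply Hne.
      assert (Hcd : Cmod (Cinv d) = exp (- l + (lam - INR r) * L)).
      { rewrite Cmod_inv by auto. unfold d. rewrite Hd, <- exp_Ropp. f_equal. ring. }
      exists (Cmod (Cinv d)). split. split. apply Cmod_ge_0.
      { rewrite Hcd, exp_plus, HrhoE.
        assert (exp (- l) <= M) by (rewrite <- HexpM; apply exp_le; lra).
        assert (exp ((lam - INR r) * L) <= exp (INR i * L)) by (apply exp_le; nra).
        assert (M <= K) by (unfold K; unfold Rdiv; rewrite <- (Rmult_1_r M) at 1;
          apply Rmult_le_compat_l; [lra|]; rewrite <- Rinv_1; apply Rinv_le_contravar; lra).
        pose proof (exp_pos (- l)). pose proof (exp_pos ((lam - INR r) * L)). pose proof (exp_pos (INR i * L)).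
        nra. }
      split. apply Cmod_1_minus. split. apply Cmod_1_minus_ge. split. apply Cmod_ge_0.
      intros Hgt. pose proof (one_minus_inv d Hdn). pose proof (He r). fold d in H0.
      rewrite Cmod_inv in Hgt by auto.
      pose proof (Cmod_gt_0 d) as [Hg _]. specialize (Hg Hdn).
      assert (Cmod d < 2).
      { apply Rinv_lt_cancel. lra. replace (/ 2) with (1/2) by field. lra. }
      pose proof (Cmod_ge_0 (Cminus 1 (Cinv d))). nra. }
    split.
    - apply (generic_lower _ K rho e I0 n); auto.
      intro i. destruct (Hu i) as [a [Ha [H0 [H1 [H2 H3]]]]]. exists a. tauto.
    - apply (generic_upper _ K rho n); auto.
      intro i. destruct (Hu i) as [a [Ha [H0 [H1 [H2 H3]]]]]. lra. }
  replace (exp (INR n * l + (INR n * (INR n - 1) / 2 - INR n * lam) * L) * B1 * B2 *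
    exp (- lam * l) * exp ((lam + 1) * lam / 2 * L)) with (Ph * B1 * B2) by (unfold Ph; ring).
  assert (0 <= Lo) by (unfold Lo; apply Rmult_le_pos; [apply pow_le; lra | left; apply exp_pos]).
  assert (0 <= exp (L - ln M)) by (left; apply exp_pos).
  split.
  - apply Rmult_le_compat; try lra. apply Rmult_le_pos; lra.
    apply Rmult_le_compat; lra.
  - apply Rmult_le_compat; try lra. apply Rmult_le_pos; lra.
    apply Rmult_le_compat; lra.
Qed.

Theorem lemmaA3 :
  forall (M alpha : R) (q : C) (eps : R),
    0 < M -> 0 < alpha -> Cmod q < 1 -> 0 < eps ->
    exists C1 C2 : R, 0 < C1 /\ 0 < C2 /\
      forall (p : C) (k : R),
        Cmod p < Cmod q ->
        Cmod p = Rpower (Cmod q) k ->   (* p = x q^k with |x| = 1, k real *)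
        forall z : C,
          1 / M < Cmod z < M ->
          (forall w : C, qpoch (Cmult w (Cpowr p (- alpha))) q = 0%C ->
             eps < Cmod (Cminus 1 (Cdiv z w))) ->
          (forall w : C, w <> 0%C ->
             qpoch (Cdiv (Cmult q (Cpowr p alpha)) w) q = 0%C ->
             eps < Cmod (Cminus 1 (Cdiv z w))) ->
          C1 <= Cmod (qpoch (Cmult z (Cpowr p (- alpha))) q)
                * Rpower (Cmod z) (- (k * alpha))
                * Rpower (Cmod q) ((k * alpha + 1) * (k * alpha) / 2)
             <= C2.
Proof.
  intros M alpha q eps HM Hal Hq Heps.
  destruct (Req_dec (Cmod q) 0) as [Hq0|Hq0].
  { exists 1, 1. split; [lra|split; [lra|]]. intros p k Hp. pose proof (Cmod_ge_0 p). lra. }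
  assert (Hqp : 0 < Cmod q < 1) by (pose proof (Cmod_ge_0 q); lra).
  set (rho := Cmod q) in *.
  set (K := M / rho). set (e := Rmin (eps/2) 1).
  assert (HK : 0 < K) by (unfold K; apply Rdiv_lt_0_compat; lra).
  destruct (pow_lt_1_zero rho ltac:(rewrite Rabs_right; lra) (1 / (2 * K)) ltac:(apply Rdiv_lt_0_compat; lra))
    as [I0 HI0'].
  assert (HI0 : forall i, (I0 <= i)%nat -> M / rho * rho ^ i <= 1/2).
  { intros i Hi. specialize (HI0' i Hi). rewrite Rabs_right in HI0' by (apply Rle_ge, pow_le; lra).
    fold K. apply Rlt_le. replace (1/2) with (K * (1 / (2 * K))) by (field; lra).
    apply Rmult_lt_compat_l; auto. }
  set (Lo := e ^ I0 * exp (-2 * (K / (1 - rho)))).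
  set (U := exp (K / (1 - rho))).
  assert (He0 : 0 < e) by (unfold e; apply Rmin_glb_lt; lra).
  exists (exp (ln rho - ln M) * Lo * Lo), (exp (ln M) * U * U).
  split. { unfold Lo. pose proof (pow_lt e I0 He0). pose proof (exp_pos (ln rho - ln M)).
    pose proof (exp_pos (-2 * (K / (1 - rho)))). repeat apply Rmult_lt_0_compat; auto. }
  split. { unfold U. repeat apply Rmult_lt_0_compat; apply exp_pos. }
  intros p k Hp Hpk z Hz Hw1 _.
  assert (HM1 : 1 < M).
  { destruct (Rle_lt_dec M 1); auto. assert (1 <= 1 / M). { unfold Rdiv; rewrite Rmult_1_l.
      rewrite <- Rinv_1. apply Rinv_le_contravar; lra. } lra. }
  set (L := ln rho).
  assert (HL : L < 0). { unfold L. rewrite <- ln_1. apply ln_increasing; lra. }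
  assert (Hk : 1 < k).
  { assert (exp (k * L) < exp L).
    { unfold L. rewrite (exp_ln rho) by lra. unfold Rpower in Hpk. rewrite <- Hpk. exact Hp. }
    apply exp_lt_inv in H. nra. }
  set (lam := k * alpha).
  assert (Hlam : 0 < lam) by (unfold lam; nra).
  assert (Hz0 : 0 < Cmod z). { assert (0 < 1 / M) by (apply Rdiv_lt_0_compat; lra). lra. }
  set (l := ln (Cmod z)).
  assert (Hl : - ln M < l < ln M).
  { unfold l. split.
    - rewrite <- ln_Rinv by lra. apply ln_increasing. apply Rinv_0_lt_compat; lra.
      replace (/ M) with (1 / M) by (unfold Rdiv; ring). lra.
    - apply ln_increasing; lra. }
  set (P := Cpowr p (- alpha)).
  assert (Hp0 : Cmod p <> 0) by (rewrite Hpk; apply Rgt_not_eq, exp_pos).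
  assert (HP : Cmod P = exp (- lam * L)).
  { unfold P. rewrite Cmod_Cpowr by auto. unfold Rpower. rewrite Hpk. unfold Rpower. rewrite ln_exp.
    fold L. f_equal. unfold lam. ring. }
  set (y := Cmult z P).
  assert (Hd : forall r, Cmod (Cmult y (Cpow_nat q r)) = exp (l + (INR r - lam) * ln (Cmod q))).
  { intro r. unfold y. rewrite !Cmod_mult, HP, Cmod_Cpow_nat. fold rho L.
    rewrite pow_exp by lra. fold L. rewrite <- (exp_ln (Cmod z)) by lra. fold l.
    rewrite <- !exp_plus. f_equal. ring. }
  assert (Hne : forall r, Cmult y (Cpow_nat q r) <> 0%C).
  { intros r E. pose proof (Hd r). rewrite E, Cmod_0 in H. pose proof (exp_pos (l + (INR r - lam) * ln (Cmod q))). lra. }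
  assert (Hq0' : q <> 0%C) by (intro E; apply Hq0; fold rho; unfold rho; rewrite E; apply Cmod_0).
  assert (Hz0' : z <> 0%C) by (intro E; rewrite E, Cmod_0 in Hz0; lra).
  assert (HP0 : P <> 0%C) by (intro E; rewrite E, Cmod_0 in HP; pose proof (exp_pos (- lam * L)); lra).
  assert (Hqr : forall r, Cpow_nat q r <> 0%C).
  { intros r E. apply (Hne r). rewrite E. ring. }
  assert (Hy0 : y <> 0%C) by (intro E; apply (Hne 0%nat); rewrite E; ring).
  assert (He : forall r, eps < Cmod (Cminus 1 (Cmult y (Cpow_nat q r)))).
  { intro r. set (w := Cdiv z (Cmult y (Cpow_nat q r))).
    replace (Cmult y (Cpow_nat q r)) with (Cdiv z w).
    2:{ unfold w. field. repeat split; auto. }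
    apply Hw1. fold P. replace (Cmult w P) with (Cinv (Cpow_nat q r)).
    apply qpoch_zero; auto.
    unfold w, y. field. repeat split; auto. }
  set (n := Z.to_nat (Int_part lam)).
  assert (Hn : INR n <= lam < INR n + 1).
  { destruct (base_Int_part lam) as [B1 B2].
    assert (0 <= Int_part lam)%Z.
    { assert (-1 < Int_part lam)%Z by (apply lt_IZR; lra). lia. }
    unfold n. rewrite INR_IZR_INZ, Znat.Z2Nat.id by auto. lra. }
  pose proof (core y q eps M lam l n I0 Hqp HM1 Heps Hd He Hl Hn HI0) as Hcore.
  fold rho L K e Lo U in Hcore.
  pose proof (qpoch_lim y q Hq) as Hlim.
  set (E1 := Rpower (Cmod z) (- (k * alpha))).
  set (E2 := Rpower (Cmod q) ((k * alpha + 1) * (k * alpha) / 2)).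
  assert (HE : E1 * E2 = exp (- lam * l) * exp ((lam + 1) * lam / 2 * L)).
  { unfold E1, E2, Rpower. fold lam rho l L. f_equal; f_equal; ring. }
  assert (Hlim2 : is_lim_seq (fun N => Cmod (qpoch_part y q N) * (E1 * E2)) (Cmod (qpoch y q) * (E1 * E2))).
  { apply (is_lim_seq_scal_r _ (E1 * E2) (Cmod (qpoch y q))). exact Hlim. }
  change (exp (L - ln M) * Lo * Lo <= Cmod (qpoch y q) * E1 * E2 <= exp (ln M) * U * U).
  rewrite (Rmult_assoc (Cmod (qpoch y q))).
  assert (Hev : forall N, (n <= N)%nat ->
     exp (L - ln M) * Lo * Lo <= Cmod (qpoch_part y q N) * (E1 * E2) <= exp (ln M) * U * U).
  { intros N HN. replace N with (n + (N - n))%nat by lia. rewrite HE, <- Rmult_assoc. apply Hcore. }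
  split.
  - assert (X := is_lim_seq_le_loc (fun _ => exp (L - ln M) * Lo * Lo) _ _ _
      (ltac:(exists n; intros N HN; apply Hev; auto) : eventually (fun N => exp (L - ln M) * Lo * Lo <= Cmod (qpoch_part y q N) * (E1 * E2)))
      (is_lim_seq_const _) Hlim2). exact X.
  - assert (X := is_lim_seq_le_loc _ (fun _ => exp (ln M) * U * U) _ _
      (ltac:(exists n; intros N HN; apply Hev; auto) : eventually (fun N => Cmod (qpoch_part y q N) * (E1 * E2) <= exp (ln M) * U * U))
      Hlim2 (is_lim_seq_const _)). exact X.
Qed.
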